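(* The set of defining sentences (first-order sentences over the vocabulary consisting of one binary relation symbol $\sim$, with equality) is undecidable.
   Context: A first-order sentence $A$ in the language with binary relation symbol $\sim$ and equality is called defining if there is a graph $G$ (a structure in which $\sim$ is irreflexive and symmetric) such that $A$ is true on $G$ and false on every structure for this language (of any cardinality) that is not isomorphic to $G$. *)

(* Defs.v *)
From Stdlib Require Import Arith List.
Import ListNotations.

Inductive form : Type :=
  | Rel (i j : nat)
  | Eq  (i j : nat)
  | Bot
  | Imp (a b : form)
  | All (a : form).          (* forall x_0, a  (binds index 0) *)
(* The other connectives/quantifiers are the usual classical abbreviations. *)

Fixpoint bound (k : nat) (f : form) : Prop :=
  match f with
  | Rel i j | Eq i j => i < k /\ j < k
  | Bot => True
  | Imp a b => bound k a /\ bound k b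
  | All a => bound (S k) a
  end.

Definition sentence (f : form) : Prop := bound 0 f.

Definition scons {D : Type} (d : D) (rho : nat -> D) (n : nat) : D :=
  match n with 0 => d | S m => rho m end.

Fixpoint holds {D : Type} (R : D -> D -> Prop) (rho : nat -> D) (f : form) : Prop :=
  match f with
  | Rel i j => R (rho i) (rho j)
  | Eq i j => rho i = rho j
  | Bot => False
  | Imp a b => holds R rho a -> holds R rho b
  | All a => forall d : D, holds R (scons d rho) a
  end.

Record structure : Type := Structure {
  dom : Type;
  rel : dom -> dom -> Prop;
  dom_inhabited : inhabited dom
}.

Definition models (M : structure) (A : form) : Prop :=
  forall rho : nat -> dom M, holds (rel M) rho A.

Definition is_graph (M : structure) : Prop :=
  (forall x : dom M, ~ rel M x x) /\
  (forall x y : dom M, rel M x y -> rel M y x).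

Definition isomorphic (M N : structure) : Prop :=
  exists (f : dom M -> dom N) (g : dom N -> dom M),
    (forall x, g (f x) = x) /\ (forall y, f (g y) = y) /\
    (forall x y, rel M x y <-> rel N (f x) (f y)).

Definition defining (A : form) : Prop :=
  sentence A /\
  exists G : structure,
    is_graph G /\ models G A /\
    (forall M : structure, ~ isomorphic M G -> ~ models M A).

Definition cpair (a b : nat) : nat := (a + b) * (a + b + 1) / 2 + b.

Fixpoint code (f : form) : nat :=
  match f with
  | Rel i j => 5 * cpair i j
  | Eq i j => 5 * cpair i j + 1
  | Bot => 2
  | Imp a b => 5 * cpair (code a) (code b) + 3
  | All a => 5 * code a + 4
  end.

Inductive recf : Type :=
  | RZero
  | RSucc
  | RProj (i : nat)
  | RComp (f : recf) (gs : list recf)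
  | RPrim (f g : recf)
  | RMu (f : recf).

Inductive eval : recf -> list nat -> nat -> Prop :=
  | ev_zero v : eval RZero v 0
  | ev_succ x v : eval RSucc (x :: v) (S x)
  | ev_proj i v : i < length v -> eval (RProj i) v (nth i v 0)
  | ev_comp f gs v ws y : evals gs v ws -> eval f ws y -> eval (RComp f gs) v y
  | ev_prim0 f g v y : eval f v y -> eval (RPrim f g) (0 :: v) y
  | ev_primS f g n v r y :
      eval (RPrim f g) (n :: v) r -> eval g (n :: r :: v) y ->
      eval (RPrim f g) (S n :: v) y
  | ev_mu f v n :
      eval f (n :: v) 0 ->
      (forall m, m < n -> exists k, eval f (m :: v) (S k)) ->
      eval (RMu f) v n
with evals : list recf -> list nat -> list nat -> Prop :=
  | evs_nil v : evals nil v nil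
  | evs_cons g gs v w ws : eval g v w -> evals gs v ws -> evals (g :: gs) v (w :: ws).

Definition decidable_set (P : nat -> Prop) : Prop :=
  exists f : recf, forall n : nat,
    (P n /\ eval f [n] 1) \/ (~ P n /\ eval f [n] 0).

(* Main.v *)
Require Import Defs.
From Stdlib Require Import Arith List Lia Classical ClassicalEpsilon.
Import ListNotations.

Inductive pf (V : Type) : Type :=
| PRel (a b : V) | PR (l a b : V) | PEq (a b : V) | PBot
| PImp (p q : pf V) | PAnd (p q : pf V) | POr (p q : pf V)
| PAll (B : V -> pf V) | PEx (B : V -> pf V).
Arguments PRel {V}. Arguments PR {V}. Arguments PEq {V}. Arguments PBot {V}.
Arguments PImp {V}. Arguments PAnd {V}. Arguments POr {V}. Arguments PAll {V}. Arguments PEx {V}.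

Definition andf a b := Imp (Imp a (Imp b Bot)) Bot.
Definition orf a b := Imp (Imp a Bot) b.
Definition exf a := Imp (All (Imp a Bot)) Bot.

Fixpoint compile (d : nat) (p : pf nat) : form :=
 match p with
 | PRel a b => Rel (d-1-a) (d-1-b)
 | PR l a b => exf (andf (Rel (d-a) 0) (andf (Rel 0 (d-b)) (andf (Rel 0 (d-l)) (Imp (Rel (d-b) (d-b)) Bot))))
 | PEq a b => Eq (d-1-a) (d-1-b)
 | PBot => Bot
 | PImp p q => Imp (compile d p) (compile d q)
 | PAnd p q => andf (compile d p) (compile d q)
 | POr p q => orf (compile d p) (compile d q)
 | PAll B => All (compile (S d) (B d))
 | PEx B => exf (compile (S d) (B d))
 end.

Definition RR {D : Type} (R : D -> D -> Prop) (l a b : D) : Prop :=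
  exists t, R a t /\ R t b /\ R t l /\ ~ R b b.

Fixpoint sem {D : Type} (R : D -> D -> Prop) (p : pf D) : Prop :=
 match p with
 | PRel a b => R a b
 | PR l a b => RR R l a b
 | PEq a b => a = b
 | PBot => False
 | PImp p q => sem R p -> sem R q
 | PAnd p q => sem R p /\ sem R q
 | POr p q => sem R p \/ sem R q
 | PAll B => forall x, sem R (B x)
 | PEx B => exists x, sem R (B x)
 end.

Inductive wf {D : Type} : list (nat * D) -> pf nat -> pf D -> Prop :=
| wf_rel ctx a1 a2 b1 b2 : In (a1,a2) ctx -> In (b1,b2) ctx -> wf ctx (PRel a1 b1) (PRel a2 b2)
| wf_r ctx l1 l2 a1 a2 b1 b2 : In (l1,l2) ctx -> In (a1,a2) ctx -> In (b1,b2) ctx ->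
    wf ctx (PR l1 a1 b1) (PR l2 a2 b2)
| wf_eq ctx a1 a2 b1 b2 : In (a1,a2) ctx -> In (b1,b2) ctx -> wf ctx (PEq a1 b1) (PEq a2 b2)
| wf_bot ctx : wf ctx PBot PBot
| wf_imp ctx p1 p2 q1 q2 : wf ctx p1 p2 -> wf ctx q1 q2 -> wf ctx (PImp p1 q1) (PImp p2 q2)
| wf_and ctx p1 p2 q1 q2 : wf ctx p1 p2 -> wf ctx q1 q2 -> wf ctx (PAnd p1 q1) (PAnd p2 q2)
| wf_or ctx p1 p2 q1 q2 : wf ctx p1 p2 -> wf ctx q1 q2 -> wf ctx (POr p1 q1) (POr p2 q2)
| wf_all ctx B1 B2 : (forall x, wf ((length ctx, x) :: ctx) (B1 (length ctx)) (B2 x)) ->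
    wf ctx (PAll B1) (PAll B2)
| wf_ex ctx B1 B2 : (forall x, wf ((length ctx, x) :: ctx) (B1 (length ctx)) (B2 x)) ->
    wf ctx (PEx B1) (PEx B2).

Definition consis {D : Type} (ctx : list (nat * D)) (env : nat -> D) : Prop :=
  forall a x, In (a,x) ctx -> a < length ctx /\ env (length ctx - 1 - a) = x.

Lemma holds_exf {D} (R : D -> D -> Prop) env a :
  holds R env (exf a) <-> exists d, holds R (scons d env) a.
Proof.
  unfold exf; simpl. split.
  - intro H. apply NNPP. intro H1. apply H. intros d Hd. apply H1. eauto.
  - intros [d Hd] H. eapply H; eauto.
Qed.

Lemma holds_andf {D} (R : D -> D -> Prop) env a b :
  holds R env (andf a b) <-> holds R env a /\ holds R env b.
Proof.
  unfold andf; simpl. split.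
  - intro H. split; apply NNPP; intro H1; apply H; intros; tauto.
  - intros [H1 H2] H. exact (H H1 H2).
Qed.

Lemma holds_orf {D} (R : D -> D -> Prop) env a b :
  holds R env (orf a b) <-> holds R env a \/ holds R env b.
Proof.
  unfold orf; simpl. split.
  - intro H. destruct (classic (holds R env a)); tauto.
  - intros [H1|H1] H; tauto.
Qed.

Lemma consis_cons {D} (ctx : list (nat * D)) env x :
  consis ctx env -> consis ((length ctx, x) :: ctx) (scons x env).
Proof.
  intros H a y Hin. simpl in Hin. destruct Hin as [E|Hin].
  - inversion E; subst. simpl. split; [lia|]. replace (length ctx - 0 - length ctx) with 0 by lia. reflexivity.
  - destruct (H a y Hin) as [H1 H2]. simpl. split; [lia|].
    replace (length ctx - 0 - a) with (S (length ctx - 1 - a)) by lia. simpl. exact H2.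
Qed.

Lemma compile_ok {D} (R : D -> D -> Prop) ctx p1 p2 :
  wf ctx p1 p2 -> forall env, consis ctx env ->
  (holds R env (compile (length ctx) p1) <-> sem R p2).
Proof.
  induction 1; intros env Hc; cbn [compile sem length].
  - destruct (Hc _ _ H) as [_ E1]. destruct (Hc _ _ H0) as [_ E2]. simpl. rewrite E1, E2. tauto.
  - destruct (Hc _ _ H) as [L1 E1]. destruct (Hc _ _ H0) as [L2 E2]. destruct (Hc _ _ H1) as [L3 E3].
    rewrite holds_exf. unfold RR.
    replace (length ctx - a1) with (S (length ctx - 1 - a1)) by lia.
    replace (length ctx - b1) with (S (length ctx - 1 - b1)) by lia.
    replace (length ctx - l1) with (S (length ctx - 1 - l1)) by lia.
    split; intros [t Ht]; exists t; revert Ht; rewrite !holds_andf; simpl; rewrite E1, E2, E3; tauto.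
  - destruct (Hc _ _ H) as [_ E1]. destruct (Hc _ _ H0) as [_ E2]. simpl. rewrite E1, E2. tauto.
  - simpl; tauto.
  - simpl. rewrite (IHwf1 env Hc), (IHwf2 env Hc). tauto.
  - rewrite holds_andf, (IHwf1 env Hc), (IHwf2 env Hc). tauto.
  - rewrite holds_orf, (IHwf1 env Hc), (IHwf2 env Hc). tauto.
  - simpl. split; intros H1 x; specialize (H1 x); apply (H0 x (scons x env) (consis_cons ctx env x Hc)); exact H1.
  - rewrite holds_exf. split; intros [x H1]; exists x; apply (H0 x (scons x env) (consis_cons ctx env x Hc)); exact H1.
Qed.

Lemma compile_bound {D} (d0 : D) ctx (p1 : pf nat) (p2 : pf D) :
  wf ctx p1 p2 -> (forall a x, In (a,x) ctx -> a < length ctx) ->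
  bound (length ctx) (compile (length ctx) p1).
Proof.
  induction 1; intros Hc; simpl.
  - pose proof (Hc _ _ H). pose proof (Hc _ _ H0). lia.
  - pose proof (Hc _ _ H). pose proof (Hc _ _ H0). pose proof (Hc _ _ H1). repeat split; lia.
  - pose proof (Hc _ _ H). pose proof (Hc _ _ H0). lia.
  - exact I.
  - auto.
  - repeat split; auto.
  - repeat split; auto.
  - apply (H0 d0). intros a x [E|Hin]; [inversion E; simpl; lia|simpl; pose proof (Hc _ _ Hin); lia].
  - repeat split. apply (H0 d0). intros a x [E|Hin]; [inversion E; simpl; lia|simpl; pose proof (Hc _ _ Hin); lia].
Qed.

Section EvalInd.
Variable P : recf -> list nat -> nat -> Prop.
Variable Q : list recf -> list nat -> list nat -> Prop.
Hypothesis hz : forall v, P RZero v 0.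
Hypothesis hs : forall x v, P RSucc (x :: v) (S x).
Hypothesis hp : forall i v, i < length v -> P (RProj i) v (nth i v 0).
Hypothesis hc : forall f gs v ws y, evals gs v ws -> Q gs v ws -> eval f ws y -> P f ws y -> P (RComp f gs) v y.
Hypothesis hp0 : forall f g v y, eval f v y -> P f v y -> P (RPrim f g) (0 :: v) y.
Hypothesis hpS : forall f g n v r y, eval (RPrim f g) (n :: v) r -> P (RPrim f g) (n :: v) r ->
   eval g (n :: r :: v) y -> P g (n :: r :: v) y -> P (RPrim f g) (S n :: v) y.
Hypothesis hmu : forall f v n, eval f (n :: v) 0 -> P f (n :: v) 0 ->
   (forall m, m < n -> exists k, eval f (m :: v) (S k) /\ P f (m :: v) (S k)) -> P (RMu f) v n.
Hypothesis hnil : forall v, Q nil v nil.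
Hypothesis hcons : forall g gs v w ws, eval g v w -> P g v w -> evals gs v ws -> Q gs v ws -> Q (g :: gs) v (w :: ws).

Fixpoint eval_ind2 p v y (H : eval p v y) {struct H} : P p v y :=
  match H in eval p v y return P p v y with
  | ev_zero v => hz v
  | ev_succ x v => hs x v
  | ev_proj i v h => hp i v h
  | ev_comp f gs v ws y H1 H2 => hc f gs v ws y H1 (evals_ind2 gs v ws H1) H2 (eval_ind2 f ws y H2)
  | ev_prim0 f g v y H1 => hp0 f g v y H1 (eval_ind2 f v y H1)
  | ev_primS f g n v r y H1 H2 => hpS f g n v r y H1 (eval_ind2 _ _ _ H1) H2 (eval_ind2 _ _ _ H2)
  | ev_mu f v n H1 H2 => hmu f v n H1 (eval_ind2 _ _ _ H1)
      (fun m hm => match H2 m hm with ex_intro _ k Hk => ex_intro _ k (conj Hk (eval_ind2 _ _ _ Hk)) end)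
  end
with evals_ind2 gs v ws (H : evals gs v ws) {struct H} : Q gs v ws :=
  match H in evals gs v ws return Q gs v ws with
  | evs_nil v => hnil v
  | evs_cons g gs v w ws H1 H2 => hcons g gs v w ws H1 (eval_ind2 _ _ _ H1) H2 (evals_ind2 _ _ _ H2)
  end.
End EvalInd.

Fixpoint subterms (p : recf) : list recf :=
  match p with
  | RComp f gs => p :: subterms f ++ flat_map subterms gs
  | RPrim f g => p :: subterms f ++ subterms g
  | RMu f => p :: subterms f
  | _ => [p]
  end.

Section RecfInd.
Variable P : recf -> Prop.
Hypothesis h0 : P RZero.
Hypothesis h1 : P RSucc.
Hypothesis h2 : forall i, P (RProj i).
Hypothesis h3 : forall f gs, P f -> Forall P gs -> P (RComp f gs).
Hypothesis h4 : forall f g, P f -> P g -> P (RPrim f g).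
Hypothesis h5 : forall f, P f -> P (RMu f).
Fixpoint recf_ind2 (r : recf) : P r :=
  match r with
  | RZero => h0 | RSucc => h1 | RProj i => h2 i
  | RComp f gs => h3 f gs (recf_ind2 f)
     ((fix G (gs : list recf) : Forall P gs :=
        match gs with [] => Forall_nil P | g :: gs' => Forall_cons g (recf_ind2 g) (G gs') end) gs)
  | RPrim f g => h4 f g (recf_ind2 f) (recf_ind2 g)
  | RMu f => h5 f (recf_ind2 f)
  end.
End RecfInd.

Lemma subterms_self p : In p (subterms p).
Proof. destruct p; simpl; auto. Qed.

Lemma subterms_trans p : forall q, In q (subterms p) -> incl (subterms q) (subterms p).
Proof.
  induction p using recf_ind2; simpl; intros q Hq.
  - destruct Hq as [<-|[]]. apply incl_refl.
  - destruct Hq as [<-|[]]. apply incl_refl.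
  - destruct Hq as [<-|[]]. apply incl_refl.
  - destruct Hq as [<-|Hq]. apply incl_refl.
    apply in_app_or in Hq. destruct Hq as [Hq|Hq].
    + intros x Hx. right. apply in_or_app. left. exact (IHp q Hq x Hx).
    + apply in_flat_map in Hq. destruct Hq as [g [Hg Hq]].
      rewrite Forall_forall in H. intros x Hx. right. apply in_or_app. right.
      apply in_flat_map. exists g. split; auto. exact (H g Hg q Hq x Hx).
  - destruct Hq as [<-|Hq]. apply incl_refl.
    apply in_app_or in Hq. intros x Hx. right. apply in_or_app.
    destruct Hq as [Hq|Hq]; [left; exact (IHp1 q Hq x Hx)|right; exact (IHp2 q Hq x Hx)].
  - destruct Hq as [<-|Hq]. apply incl_refl. intros x Hx. right. exact (IHp q Hq x Hx).
Qed.

Definition closedL (L : list recf) : Prop :=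
  (forall f gs, In (RComp f gs) L -> In f L /\ forall g, In g gs -> In g L) /\
  (forall f g, In (RPrim f g) L -> In f L /\ In g L) /\
  (forall f, In (RMu f) L -> In f L).

Lemma subterms_closed h : closedL (subterms h).
Proof.
  split; [|split].
  - intros f gs H. pose proof (subterms_trans h _ H) as T. split.
    + apply T. simpl. right. apply in_or_app. left. apply subterms_self.
    + intros g Hg. apply T. simpl. right. apply in_or_app. right. apply in_flat_map.
      exists g. split; auto. apply subterms_self.
  - intros f g H. pose proof (subterms_trans h _ H) as T. split; apply T; simpl; right; apply in_or_app;
    [left|right]; apply subterms_self.
  - intros f H. pose proof (subterms_trans h _ H) as T. apply T. simpl. right. apply subterms_self.
Qed.

Fixpoint cst (k : nat) : recf := match k with 0 => RZero | S k => RComp RSucc [cst k] end.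
Lemma eval_cst k v : eval (cst k) v k.
Proof.
  induction k; simpl. constructor.
  econstructor. econstructor. exact IHk. constructor. constructor.
Qed.

Lemma eval_eq p v y y' : eval p v y -> y = y' -> eval p v y'.
Proof. intros H <-; exact H. Qed.

Definition addR := RPrim (RProj 0) (RComp RSucc [RProj 1]).
Lemma eval_add a b v : eval addR (a :: b :: v) (a + b).
Proof.
  induction a; simpl.
  - constructor. apply (ev_proj 0 (b :: v)). simpl; lia.
  - eapply ev_primS. exact IHa. econstructor. econstructor.
    apply (ev_proj 1 (a :: a + b :: b :: v)). simpl; lia. constructor. constructor.
Qed.

Definition mulR := RPrim RZero (RComp addR [RProj 1; RProj 2]).
Lemma eval_mul a b v : eval mulR (a :: b :: v) (a * b).
Proof.
  induction a; simpl.
  - constructor. constructor.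
  - eapply eval_eq. eapply ev_primS. exact IHa. econstructor. econstructor.
    apply (ev_proj 1 (a :: a * b :: b :: v)). simpl; lia.
    econstructor. apply (ev_proj 2 (a :: a * b :: b :: v)). simpl; lia. constructor.
    apply eval_add. simpl. lia.
Qed.

Fixpoint tri (n : nat) : nat := match n with 0 => 0 | S n => S (n + tri n) end.
Definition triR := RPrim RZero (RComp RSucc [RComp addR [RProj 0; RProj 1]]).
Lemma eval_tri n v : eval triR (n :: v) (tri n).
Proof.
  induction n; simpl.
  - constructor. constructor.
  - eapply ev_primS. exact IHn. econstructor. econstructor.
    econstructor. econstructor. apply (ev_proj 0 (n :: tri n :: v)). simpl; lia.
    econstructor. apply (ev_proj 1 (n :: tri n :: v)). simpl; lia. constructor.
    apply eval_add. constructor. constructor.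
Qed.

Lemma tri_double n : 2 * tri n = n * (n + 1).
Proof. induction n; simpl tri; lia. Qed.

Lemma cpair_tri a b : cpair a b = tri (a + b) + b.
Proof.
  unfold cpair. f_equal. rewrite <- tri_double. rewrite Nat.mul_comm. apply Nat.div_mul. lia.
Qed.

Inductive aexp := AV (i : nat) | AK (k : nat) | AAdd (a b : aexp) | AMul (a b : aexp) | ACp (a b : aexp).
Fixpoint aeval (v : list nat) (e : aexp) : nat :=
  match e with
  | AV i => nth i v 0 | AK k => k
  | AAdd a b => aeval v a + aeval v b
  | AMul a b => aeval v a * aeval v b
  | ACp a b => cpair (aeval v a) (aeval v b)
  end.
Fixpoint aok (n : nat) (e : aexp) : Prop :=
  match e with
  | AV i => i < n | AK _ => True
  | AAdd a b | AMul a b | ACp a b => aok n a /\ aok n b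
  end.
Definition cpairR := RComp addR [RComp triR [RComp addR [RProj 0; RProj 1]]; RProj 1].
Fixpoint acomp (e : aexp) : recf :=
  match e with
  | AV i => RProj i | AK k => cst k
  | AAdd a b => RComp addR [acomp a; acomp b]
  | AMul a b => RComp mulR [acomp a; acomp b]
  | ACp a b => RComp cpairR [acomp a; acomp b]
  end.

Lemma eval_cpair a b v : eval cpairR (a :: b :: v) (cpair a b).
Proof.
  rewrite cpair_tri. unfold cpairR. econstructor. econstructor.
  econstructor. econstructor. econstructor. econstructor.
  apply (ev_proj 0 (a :: b :: v)). simpl; lia. econstructor.
  apply (ev_proj 1 (a :: b :: v)). simpl; lia. constructor.
  apply eval_add. constructor. apply eval_tri.
  econstructor. apply (ev_proj 1 (a :: b :: v)). simpl; lia. constructor.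
  apply eval_add.
Qed.

Lemma eval_acomp e v : aok (length v) e -> eval (acomp e) v (aeval v e).
Proof.
  induction e; simpl; intro H.
  - constructor. exact H.
  - apply eval_cst.
  - destruct H. econstructor. econstructor. apply IHe1; auto. econstructor. apply IHe2; auto. constructor.
    apply eval_add.
  - destruct H. econstructor. econstructor. apply IHe1; auto. econstructor. apply IHe2; auto. constructor.
    apply eval_mul.
  - destruct H. econstructor. econstructor. apply IHe1; auto. econstructor. apply IHe2; auto. constructor.
    apply eval_cpair.
Qed.

Definition imp_c a b := 5 * cpair a b + 3.
Definition all_c a := 5 * a + 4.
Definition ex_c a := imp_c (all_c (imp_c a 2)) 2.
Definition and_c a b := imp_c (imp_c a (imp_c b 2)) 2.
Definition or_c a b := imp_c (imp_c a 2) b.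

Definition eimp a b := AAdd (AMul (AK 5) (ACp a b)) (AK 3).
Definition eall a := AAdd (AMul (AK 5) a) (AK 4).
Definition eex a := eimp (eall (eimp a (AK 2))) (AK 2).
Definition eand a b := eimp (eimp a (eimp b (AK 2))) (AK 2).
Definition eor a b := eimp (eimp a (AK 2)) b.

Lemma tri_mono a b : a <= b -> tri a <= tri b.
Proof. induction 1; simpl; lia. Qed.

Lemma cpair_inj a b a' b' : cpair a b = cpair a' b' -> a = a' /\ b = b'.
Proof.
  rewrite !cpair_tri. intro E.
  assert (a + b = a' + b').
  { destruct (lt_eq_lt_dec (a+b) (a'+b')) as [[Hl|Hl]|Hl]; auto.
    - pose proof (tri_mono (S (a+b)) (a'+b') Hl). simpl in H. lia.
    - pose proof (tri_mono (S (a'+b')) (a+b) Hl). simpl in H. lia. }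
  rewrite H in E. lia.
Qed.

Lemma code_inj : forall A B, code A = code B -> A = B.
Proof.
  induction A; destruct B; simpl; intro E; try lia;
  try (assert (cpair i j = cpair i0 j0) by lia; apply cpair_inj in H; destruct H; subst; reflexivity).
  - reflexivity.
  - assert (cpair (code A1) (code A2) = cpair (code B1) (code B2)) by lia.
    apply cpair_inj in H. destruct H. f_equal; auto.
  - f_equal. apply IHA. lia.
Qed.

Definition PAll2 {V} (B : V -> V -> pf V) := PAll (fun a => PAll (fun b => B a b)).
Definition PAll3 {V} (B : V -> V -> V -> pf V) := PAll (fun a => PAll (fun b => PAll (fun c => B a b c))).
Definition PEx2 {V} (B : V -> V -> pf V) := PEx (fun a => PEx (fun b => B a b)).
Definition PTrue {V} : pf V := PImp PBot PBot.

Definition Theta {V} : pf V :=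
  PAnd (PAll2 (fun x y => PEq x y)) (PAll (fun x => PImp (PRel x x) PBot)).

Fixpoint Pn {V} (x : nat) (v s z : V) : pf V :=
  match x with
  | 0 => PR z v v
  | S x => PEx (fun w => PAnd (PR s w v) (PAll (fun s' => PAll (fun z' =>
             PImp (PEq s' s) (PImp (PEq z' z) (Pn x w s' z'))))))
  end.

Section Gens.
Context {V : Type} (s z : V) (lab : nat -> V) (ix : recf -> nat).
Definition gS a b := PR s a b.
Definition gZ a := PR z a a.
Definition gNum a := PR (lab 0) a a.
Definition gLt a b := PR (lab 1) a b.
Definition gHd a b := PR (lab 2) a b.
Definition gTl a b := PR (lab 3) a b.
Definition gNil a := PR (lab 4) a a.
Definition gCl p a b := PR (lab (5 + ix p)) a b.

Definition Fixed : pf V :=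
  PAnd (PEx (fun a => gZ a)) (
  PAnd (PAll2 (fun a b => PImp (gZ a) (PImp (gZ b) (PEq a b)))) (
  PAnd (PAll (fun a => PImp (gZ a) (gNum a))) (
  PAnd (PAll (fun a => PImp (gNum a) (PEx (fun b => gS a b)))) (
  PAnd (PAll2 (fun a b => PImp (gS a b) (gNum b))) (
  PAnd (PAll3 (fun a b c => PImp (gS a b) (PImp (gS a c) (PEq b c)))) (
  PAnd (PAll3 (fun a b c => PImp (gS a c) (PImp (gS b c) (PEq a b)))) (
  PAnd (PAll2 (fun a b => PImp (gS a b) (PImp (gZ b) PBot))) (
  PAnd (PAll2 (fun a b => PImp (gNum a) (PImp (gNum b) (POr (gLt a b) (POr (PEq a b) (gLt b a)))))) (
  PAnd (PAll2 (fun x a => PImp (gZ a) (PImp (gLt x a) PBot))) (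
  PAnd (PAll3 (fun x y sy => PImp (gS y sy) (PImp (gLt x sy) (POr (gLt x y) (PEq x y))))) (
  PAnd (PAll3 (fun l a b => PImp (gHd l a) (PImp (gHd l b) (PEq a b))))
       (PAll3 (fun l a b => PImp (gTl l a) (PImp (gTl l b) (PEq a b))))))))))))))).

Fixpoint Nthg (i : nat) (l y : V) : pf V :=
  match i with
  | 0 => gHd l y
  | S i => PEx (fun l' => PAnd (gTl l l') (Nthg i l' y))
  end.

Fixpoint ListOfg (gs : list recf) (l l0 : V) : pf V :=
  match gs with
  | [] => gNil l0
  | g :: gs => PEx (fun w => PAnd (gHd l0 w) (PAnd (gCl g l w)
                 (PEx (fun l1 => PAnd (gTl l0 l1) (ListOfg gs l l1)))))
  end.

Definition Concl (p : recf) (l y : V) : pf V :=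
  match p with
  | RZero => gZ y
  | RSucc => PEx (fun x => PAnd (gHd l x) (gS x y))
  | RProj i => Nthg i l y
  | RComp f gs => PEx (fun l0 => PAnd (ListOfg gs l l0) (gCl f l0 y))
  | RPrim f g => PEx2 (fun x l2 => PAnd (gHd l x) (PAnd (gTl l l2)
       (POr (PAnd (gZ x) (gCl f l2 y))
            (PEx (fun p => PEx (fun r => PEx (fun lp => PEx (fun lg => PEx (fun lg' =>
               PAnd (gS p x) (PAnd (gHd lp p) (PAnd (gTl lp l2) (PAnd (gCl (RPrim f g) lp r)
               (PAnd (gHd lg p) (PAnd (gTl lg lg') (PAnd (gHd lg' r) (PAnd (gTl lg' l2)
                 (gCl g lg y)))))))))))))))))
  | RMu f => PAnd (gNum y) (PAnd
       (PEx2 (fun l' z0 => PAnd (gHd l' y) (PAnd (gTl l' l) (PAnd (gZ z0) (gCl f l' z0)))))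
       (PAll (fun m => PImp (gLt m y) (PEx (fun lm => PEx (fun k => PEx (fun sk =>
          PAnd (gHd lm m) (PAnd (gTl lm l) (PAnd (gS k sk) (gCl f lm sk))))))))))
  end.

Definition Ax (p : recf) : pf V := PAll2 (fun l y => PImp (gCl p l y) (Concl p l y)).

Definition Root (h : recf) (v : V) : pf V :=
  PEx (fun l => PEx (fun ln => PEx (fun o => PEx (fun z0 =>
    PAnd (gNil ln) (PAnd (gHd l v) (PAnd (gTl l ln) (PAnd (gZ z0) (PAnd (gS z0 o) (gCl h l o))))))))).
End Gens.

Fixpoint bigAnd {V} (ps : list (pf V)) : pf V :=
  match ps with [] => PTrue | p :: ps => PAnd p (bigAnd ps) end.

Fixpoint exs {V} (n : nat) (B : list V -> pf V) : pf V :=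
  match n with 0 => B [] | S n => PEx (fun x => exs n (fun xs => B (x :: xs))) end.

Definition ixf (L : list recf) (p : recf) : nat :=
  epsilon (inhabits 0) (fun k => k < length L /\ nth k L RZero = p).

Lemma ixf_spec L p : In p L -> ixf L p < length L /\ nth (ixf L p) L RZero = p.
Proof.
  intro H. unfold ixf. apply epsilon_spec. apply In_nth with (d := RZero) in H.
  destruct H as [k [H1 H2]]. exists k. auto.
Qed.

Definition Body {V} (h : recf) (v s z : V) : pf V :=
  let L := subterms h in
  exs (5 + length L) (fun labs => let lab := fun k => nth k labs v in
    PAnd (Fixed s z lab) (PAnd (bigAnd (map (Ax s z lab (ixf L)) L)) (Root s z lab (ixf L) h v))).

Definition Aform {V} (h : recf) (x : nat) : pf V :=
  POr Theta (PEx (fun v => PEx (fun s => PEx (fun z => PAnd (Pn x v s z) (Body h v s z))))).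

Ltac inctx := simpl; repeat (first [ left; reflexivity | right ]); auto.
Ltac unf := unfold PAll2, PAll3, PEx2, PTrue, gS, gZ, gNum, gLt, gHd, gTl, gNil, gCl in *.
Ltac wfstep := match goal with
 | |- wf _ _ _ => constructor
 | |- forall _, _ => intro
 | |- In _ _ => inctx
 end.
Ltac wfauto := unf; repeat wfstep.

Section W.
Context {D : Type}.

Lemma wf_Pn x : forall (ctx : list (nat * D)) v1 v2 s1 s2 z1 z2,
  In (v1,v2) ctx -> In (s1,s2) ctx -> In (z1,z2) ctx -> wf ctx (Pn x v1 s1 z1) (Pn x v2 s2 z2).
Proof.
  induction x; intros; simpl; wfauto. apply IHx; inctx.
Qed.

Lemma wf_Theta (ctx : list (nat * D)) : wf ctx Theta Theta.
Proof. unfold Theta. wfauto. Qed.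

Section L.
Variables (ctx0 : list (nat * D)) (lab1 : nat -> nat) (lab2 : nat -> D) (ix : recf -> nat)
  (s1 z1 : nat) (s2 z2 : D).
Hypothesis Hlab : forall k, In (lab1 k, lab2 k) ctx0.
Hypothesis Hs : In (s1, s2) ctx0.
Hypothesis Hz : In (z1, z2) ctx0.

Definition ext (ctx : list (nat * D)) := incl ctx0 ctx.

Lemma ext_cons ctx e : ext ctx -> ext (e :: ctx).
Proof. intros H x Hx. right. auto. Qed.

Lemma wf_Fixed ctx : ext ctx -> wf ctx (Fixed s1 z1 lab1) (Fixed s2 z2 lab2).
Proof.
  intro He. pose proof (fun k => He _ (Hlab k)) as Hl. pose proof (He _ Hs). pose proof (He _ Hz).
  unfold Fixed. wfauto.
Qed.

Lemma wf_Nthg i : forall ctx l1 l2 y1 y2, ext ctx -> In (l1,l2) ctx -> In (y1,y2) ctx ->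
  wf ctx (Nthg lab1 i l1 y1) (Nthg lab2 i l2 y2).
Proof.
  induction i; intros ctx l1 l2 y1 y2 He H1 H2; pose proof (fun k => He _ (Hlab k)) as Hl; simpl; wfauto.
  apply IHi. apply ext_cons; auto. inctx. inctx.
Qed.

Lemma wf_ListOfg gs : forall ctx l1 l2 y1 y2, ext ctx -> In (l1,l2) ctx -> In (y1,y2) ctx ->
  wf ctx (ListOfg lab1 ix gs l1 y1) (ListOfg lab2 ix gs l2 y2).
Proof.
  induction gs; intros ctx l1 l2 y1 y2 He H1 H2; pose proof (fun k => He _ (Hlab k)) as Hl; simpl; wfauto.
  apply IHgs. do 2 apply ext_cons; auto. inctx. inctx.
Qed.

Lemma wf_Ax ctx p : ext ctx -> wf ctx (Ax s1 z1 lab1 ix p) (Ax s2 z2 lab2 ix p).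
Proof.
  intro He. pose proof (fun k => He _ (Hlab k)) as Hl. pose proof (He _ Hs). pose proof (He _ Hz).
  unfold Ax. destruct p; unfold Concl; wfauto.
  - apply wf_Nthg. do 2 apply ext_cons; auto. inctx. inctx.
  - apply wf_ListOfg. do 3 apply ext_cons; auto. inctx. inctx.
Qed.

Lemma wf_bigAnd ctx L : ext ctx -> wf ctx (bigAnd (map (Ax s1 z1 lab1 ix) L)) (bigAnd (map (Ax s2 z2 lab2 ix) L)).
Proof.
  intro He. induction L; simpl. unfold PTrue; wfauto. constructor; auto. apply wf_Ax; auto.
Qed.

Lemma wf_Root ctx h v1 v2 : ext ctx -> In (v1, v2) ctx -> wf ctx (Root s1 z1 lab1 ix h v1) (Root s2 z2 lab2 ix h v2).
Proof.
  intros He Hv. pose proof (fun k => He _ (Hlab k)) as Hl. pose proof (He _ Hs). pose proof (He _ Hz).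
  unfold Root. wfauto.
Qed.
End L.

Lemma wf_exs n : forall (ctx : list (nat * D)) B1 B2,
  (forall ctx' xs1 xs2, incl ctx ctx' -> Forall2 (fun a b => In (a,b) ctx') xs1 xs2 -> wf ctx' (B1 xs1) (B2 xs2)) ->
  wf ctx (exs n B1) (exs n B2).
Proof.
  induction n; intros ctx B1 B2 H; simpl.
  - apply H. apply incl_refl. constructor.
  - constructor. intro x. apply IHn. intros ctx' xs1 xs2 Hi HF. apply H.
    intros e He. apply Hi. right. exact He.
    constructor. apply Hi. left. reflexivity. exact HF.
Qed.

Lemma Forall2_nth (ctx : list (nat * D)) xs1 xs2 d1 d2 :
  Forall2 (fun a b => In (a,b) ctx) xs1 xs2 -> In (d1,d2) ctx -> forall k, In (nth k xs1 d1, nth k xs2 d2) ctx.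
Proof.
  induction 1; intros Hd k; destruct k; simpl; auto.
Qed.

Lemma wf_Body (ctx : list (nat * D)) h v1 v2 s1 s2 z1 z2 :
  In (v1,v2) ctx -> In (s1,s2) ctx -> In (z1,z2) ctx -> wf ctx (Body h v1 s1 z1) (Body h v2 s2 z2).
Proof.
  intros Hv Hs Hz. unfold Body. apply wf_exs. intros ctx' xs1 xs2 Hi HF.
  assert (Hl : forall k, In (nth k xs1 v1, nth k xs2 v2) ctx') by (apply Forall2_nth; auto).
  constructor. apply (wf_Fixed ctx'); auto. apply incl_refl.
  constructor. apply (wf_bigAnd ctx'); auto. apply incl_refl.
  apply (wf_Root ctx'); auto. apply incl_refl.
Qed.

Lemma wf_Aform h x : wf (@nil (nat * D)) (Aform h x) (Aform h x).
Proof.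
  unfold Aform. constructor. apply wf_Theta. constructor; intro; constructor; intro; constructor; intro; constructor.
  apply wf_Pn; inctx. apply wf_Body; inctx.
Qed.
End W.

Section Sound.
Context {D : Type} (R : D -> D -> Prop) (s z : D) (lab : nat -> D) (ix : recf -> nat) (L : list recf).
Hypothesis Hfix : sem R (Fixed s z lab).
Hypothesis Hax : forall p, In p L -> sem R (Ax s z lab ix p).
Hypothesis HL : closedL L.

Fixpoint IsNum (n : nat) (e : D) : Prop :=
  match n with 0 => RR R z e e | S n => exists p, IsNum n p /\ RR R s p e end.
Fixpoint Rep (l : D) (v : list nat) : Prop :=
  match v with
  | [] => RR R (lab 4) l l
  | x :: v => exists e, IsNum x e /\ RR R (lab 2) l e /\ exists l2, RR R (lab 3) l l2 /\ Rep l2 v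
  end.

Ltac getfix := pose proof Hfix as HF; unfold Fixed, PAll2, PAll3 in HF; simpl in HF;
  destruct HF as [F1 [F2 [F3 [F4 [F5 [F6 [F7 [F8 [F9 [F10 [F11 [F12 F13]]]]]]]]]]]].

Lemma IsNum_fun n : forall a b, IsNum n a -> IsNum n b -> a = b.
Proof.
  getfix. induction n; simpl; intros a b Ha Hb.
  - apply F2; auto.
  - destruct Ha as [p [Hp Hpa]]. destruct Hb as [q [Hq Hqb]].
    rewrite (IHn p q Hp Hq) in Hpa. apply (F6 q); auto.
Qed.

Lemma IsNum_num n : forall a, IsNum n a -> RR R (lab 0) a a.
Proof.
  getfix. induction n; simpl; intros a Ha. apply F3; auto.
  destruct Ha as [p [Hp Hpa]]. eapply F5; eauto.
Qed.

Lemma IsNum_ex n : exists a, IsNum n a.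
Proof.
  getfix. induction n; simpl.
  - exact F1.
  - destruct IHn as [a Ha]. destruct (F4 a (IsNum_num n a Ha)) as [b Hb]. eauto.
Qed.

Lemma IsNum_S_notzero n a : IsNum (S n) a -> IsNum 0 a -> False.
Proof.
  getfix. simpl. intros [p [_ Hp]] Hz. exact (F8 p a Hp Hz).
Qed.

Lemma Lt_num n : forall x a, IsNum n a -> RR R (lab 1) x a -> exists m, m < n /\ IsNum m x.
Proof.
  getfix. induction n; simpl; intros x a Ha Hl.
  - exfalso. exact (F10 x a Ha Hl).
  - destruct Ha as [p [Hp Hpa]]. destruct (F11 x p a Hpa Hl) as [H|H].
    + destruct (IHn x p Hp H) as [m [Hm Hx]]. exists m. split; auto.
    + subst. exists n. auto.
Qed.

Lemma Nth_sound i : forall v l y', Rep l v -> i < length v -> sem R (Nthg lab i l y') -> IsNum (nth i v 0) y'.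
Proof.
  getfix. induction i; intros v l y' Hr Hi Hn; destruct v as [|x v]; simpl in *; try lia.
  - destruct Hr as [e [He [Hle _]]]. rewrite (F12 l y' e Hn Hle). exact He.
  - destruct Hr as [e [He [Hle [l2 [Hl2 Hr]]]]]. destruct Hn as [l' [Hl' Hn]].
    rewrite (F13 l l' l2 Hl' Hl2) in Hn. apply (IHi v l2); auto. lia.
Qed.

Lemma sound : forall p v y, eval p v y -> In p L -> forall l y', Rep l v -> RR R (lab (5 + ix p)) l y' -> IsNum y y'.
Proof.
  getfix. destruct HL as [HC [HP HM]].
  apply (eval_ind2 (fun p v y => In p L -> forall l y', Rep l v -> RR R (lab (5 + ix p)) l y' -> IsNum y y')
    (fun gs v ws => (forall g, In g gs -> In g L) -> forall l l0, Rep l v -> sem R (ListOfg lab ix gs l l0) -> Rep l0 ws)).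
  -
    intros v Hin l y' Hr Hc. pose proof (Hax _ Hin) as A. unfold Ax, PAll2 in A. simpl in A.
    exact (A l y' Hc).
  -
    intros x v Hin l y' Hr Hc. pose proof (Hax _ Hin) as A. unfold Ax, PAll2 in A. simpl in A.
    destruct (A l y' Hc) as [x' [Hx' Hs]]. destruct Hr as [e [He [Hle _]]].
    rewrite (F12 l x' e Hx' Hle) in Hs. simpl. eauto.
  -
    intros i v Hi Hin l y' Hr Hc. pose proof (Hax _ Hin) as A. unfold Ax, PAll2 in A. simpl in A.
    apply (Nth_sound i v l y'); auto.
  -
    intros f gs v ws y Hevs IHs Hev IH Hin l y' Hr Hc. pose proof (Hax _ Hin) as A. unfold Ax, PAll2 in A. simpl in A.
    destruct (A l y' Hc) as [l0 [Hls Hcl]]. destruct (HC f gs Hin) as [Hf Hgs].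
    apply (IH Hf l0 y'); auto. apply (IHs Hgs l l0); auto.
  -
    intros f g v y Hev IH Hin l y' Hr Hc. pose proof (Hax _ Hin) as A. unfold Ax, PAll2, PEx2 in A. simpl in A.
    destruct (A l y' Hc) as [x [l2 [Hx [Hl2 Hd]]]]. destruct (HP f g Hin) as [Hf Hg].
    destruct Hr as [e [He [Hle [l2' [Hl2' Hr]]]]].
    rewrite (F12 l x e Hx Hle) in Hd. rewrite (F13 l l2 l2' Hl2 Hl2') in Hd.
    destruct Hd as [[Hz Hcf]|[p [r [lp [lg [lg' [Hp _]]]]]]].
    + apply (IH Hf l2'); auto.
    + exfalso. exact (F8 p e Hp He).
  -
    intros f g n v r y Hev1 IH1 Hev2 IH2 Hin l y' Hr Hc. pose proof (Hax _ Hin) as A. unfold Ax, PAll2, PEx2 in A. simpl in A.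
    destruct (A l y' Hc) as [x [l2 [Hx [Hl2 Hd]]]]. destruct (HP f g Hin) as [Hf Hg].
    destruct Hr as [e [He [Hle [l2' [Hl2' Hr]]]]].
    rewrite (F12 l x e Hx Hle) in Hd. rewrite (F13 l l2 l2' Hl2 Hl2') in Hd.
    destruct He as [p0 [Hp0 Hp0e]].
    destruct Hd as [[Hz Hcf]|[p [r' [lp [lg [lg' [Hp [Hlp1 [Hlp2 [Hcr [Hlg1 [Hlg2 [Hlg3 [Hlg4 Hcg]]]]]]]]]]]]]].
    + exfalso. exact (F8 p0 e Hp0e Hz).
    + rewrite (F7 p p0 e Hp Hp0e) in *.
      assert (Hrr : IsNum r r').
      { apply (IH1 Hin lp r'); auto. simpl. exists p0. split; auto. split; auto. exists l2'. auto. }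
      apply (IH2 Hg lg y'); auto. simpl. exists p0. split; auto. split; auto. exists lg'. split; auto.
      exists r'. split; auto. split; auto. exists l2'. auto.
  -
    intros f v n Hev IH Hlt Hin l y' Hr Hc. pose proof (Hax _ Hin) as A. unfold Ax, PAll2, PEx2 in A. simpl in A.
    destruct (A l y' Hc) as [Hnum [[l' [z0 [Hl'1 [Hl'2 [Hz0 Hcz]]]]] Hall]]. pose proof (HM f Hin) as Hf.
    destruct (IsNum_ex n) as [en Hen].
    destruct (F9 en y' (IsNum_num n en Hen) Hnum) as [H|[H|H]].
    + exfalso. destruct (Hall en H) as [lm [k [sk [Hm1 [Hm2 [Hks Hcl]]]]]].
      assert (IsNum 0 sk). { apply (IH Hf lm sk); auto. simpl. exists en. split; auto. split; auto. exists l. auto. }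
      exact (F8 k sk Hks H0).
    + subst. exact Hen.
    + exfalso. destruct (Lt_num n y' en Hen H) as [m [Hm Hmy]].
      destruct (Hlt m Hm) as [k [Hevk IHk]].
      assert (IsNum (S k) z0). { apply (IHk Hf l' z0); auto. simpl. exists y'. split; auto. split; auto. exists l. auto. }
      exact (IsNum_S_notzero k z0 H0 Hz0).
  -
    intros v _ l l0 Hr Hl. simpl in Hl. exact Hl.
  -
    intros g gs v w ws Hev IH Hevs IHs Hin l l0 Hr Hl. simpl in Hl.
    destruct Hl as [w' [Hw1 [Hw2 [l1 [Hl1 Hl]]]]].
    simpl. exists w'. split. apply (IH (Hin g (or_introl eq_refl)) l w'); auto.
    split; auto. exists l1. split; auto. apply (IHs (fun g' H => Hin g' (or_intror H)) l); auto.
Qed.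
End Sound.

Inductive U := UN (n : nat) | UL (v : list nat).
Inductive El := EV (u : U) | ET (k : nat) (a b : U) | EL (k : nat).

Section Std.
Variable L : list recf.
Variable ix : recf -> nat.
Hypothesis Hix : forall p, In p L -> ix p < length L /\ nth (ix p) L RZero = p.
Hypothesis HL : closedL L.

Definition Rstd (j : nat) (a b : U) : Prop :=
  match j with
  | 0 => match a, b with UN n, UN m => m = S n | _, _ => False end
  | 1 => match a, b with UN n, UN m => n = 0 /\ m = 0 | _, _ => False end
  | 2 => match a, b with UN n, UN m => n = m | _, _ => False end
  | 3 => match a, b with UN n, UN m => n < m | _, _ => False end
  | 4 => match a, b with UL (x :: v), UN y => y = x | _, _ => False end
  | 5 => match a, b with UL (x :: v), UL w => w = v | _, _ => False end
  | 6 => match a, b with UL [], UL [] => True | _, _ => False end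
  | S (S (S (S (S (S (S k)))))) => match a, b with UL v, UN y => eval (nth k L RZero) v y | _, _ => False end
  end.

Definition relStd (x y : El) : Prop :=
  match x, y with
  | EV a, ET k a' b => a = a' /\ Rstd k a b
  | ET k a b, EV b' => b = b' /\ Rstd k a b
  | ET k _ _, EL k' => k = k'
  | EL k, EL k' => k = k'
  | _, _ => False
  end.

Lemma RR_std j x y : RR relStd (EL j) x y <-> exists a b, x = EV a /\ y = EV b /\ Rstd j a b.
Proof.
  split.
  - intros [t [H1 [H2 [H3 H4]]]].
    destruct x; destruct t; simpl in *; try tauto; destruct y; simpl in *; try tauto;
    try (subst; tauto).
    destruct H1 as [-> Hr]. destruct H2 as [-> _]. subst. eauto.
  - intros [a [b [-> [-> H]]]]. exists (ET j a b). simpl. tauto.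
Qed.

Lemma RR_std_i j a b : Rstd j a b -> RR relStd (EL j) (EV a) (EV b).
Proof. intro H. apply RR_std. eauto. Qed.

Ltac dstd := repeat match goal with
 | H : RR relStd (EL _) _ _ |- _ => apply RR_std in H; destruct H as [? [? [? [? ?]]]]; subst
 | H : EV _ = EV _ |- _ => injection H; clear H; intros; subst
 | H : UN _ = UN _ |- _ => injection H; clear H; intros; subst
 | H : UL _ = UL _ |- _ => injection H; clear H; intros; subst
 end.
Ltac dU := repeat match goal with
 | u : U |- _ => destruct u
 | H : Rstd _ (UL ?l) _ |- _ => is_var l; destruct l
 | H : Rstd _ _ (UL ?l) |- _ => is_var l; destruct l
 end; simpl in *; try tauto; dstd; repeat match goal with H : _ /\ _ |- _ => destruct H end; subst.

Variable lab : nat -> El.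
Hypothesis Hlab : forall k, k < 5 + length L -> lab k = EL (2 + k).

Lemma lab_lt k : k < 5 -> lab k = EL (2 + k).
Proof. intro; apply Hlab; lia. Qed.

Lemma std_Fixed : sem relStd (Fixed (EL 0) (EL 1) lab).
Proof.
  unfold Fixed, PAll2, PAll3. simpl. rewrite !lab_lt by lia. simpl.
  repeat split.
  all: intros; dstd; dU; try solve [reflexivity | lia | congruence | (apply RR_std_i; simpl; auto; lia)].
  - exists (EV (UN 0)). apply RR_std_i. simpl. auto.
  - exists (EV (UN (S n))). apply RR_std_i. simpl. auto.
  - destruct (lt_eq_lt_dec n0 n) as [[H|H]|H].
    + left. apply RR_std_i. simpl. auto.
    + right; left. subst. reflexivity.
    + right; right. apply RR_std_i. simpl. auto.
  - match goal with H : _ < S _ |- _ => inversion H; subst end.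
    + right. reflexivity.
    + left. apply RR_std_i. simpl. lia.
Qed.

Lemma cl_i q v y : In q L -> eval q v y -> RR relStd (lab (5 + ix q)) (EV (UL v)) (EV (UN y)).
Proof.
  intros Hq He. destruct (Hix q Hq) as [H1 H2]. rewrite Hlab by lia. apply RR_std_i. simpl. rewrite H2. exact He.
Qed.
Lemma cl_e q l y : In q L -> RR relStd (lab (5 + ix q)) l y -> exists v w, l = EV (UL v) /\ y = EV (UN w) /\ eval q v w.
Proof.
  intros Hq H. destruct (Hix q Hq) as [H1 H2]. rewrite Hlab in H by lia. apply RR_std in H. destruct H as [a [b [-> [-> H]]]].
  destruct a; destruct b; simpl in H; try tauto. rewrite H2 in H. eauto.
Qed.
Lemma hd_i x v : RR relStd (lab 2) (EV (UL (x :: v))) (EV (UN x)).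
Proof. rewrite lab_lt by lia. apply RR_std_i. simpl. auto. Qed.
Lemma tl_i x v : RR relStd (lab 3) (EV (UL (x :: v))) (EV (UL v)).
Proof. rewrite lab_lt by lia. apply RR_std_i. simpl. auto. Qed.
Lemma nil_i : RR relStd (lab 4) (EV (UL [])) (EV (UL [])).
Proof. rewrite lab_lt by lia. apply RR_std_i. simpl. auto. Qed.
Lemma num_i n : RR relStd (lab 0) (EV (UN n)) (EV (UN n)).
Proof. rewrite lab_lt by lia. apply RR_std_i. simpl. auto. Qed.
Lemma lt_i n m : n < m -> RR relStd (lab 1) (EV (UN n)) (EV (UN m)).
Proof. intro. rewrite lab_lt by lia. apply RR_std_i. simpl. auto. Qed.
Lemma lt_e x n : RR relStd (lab 1) x (EV (UN n)) -> exists m, x = EV (UN m) /\ m < n.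
Proof. intro H. rewrite lab_lt in H by lia. dstd. dU. eauto. Qed.
Lemma S_i n : RR relStd (EL 0) (EV (UN n)) (EV (UN (S n))).
Proof. apply RR_std_i. simpl. auto. Qed.
Lemma Z_i : RR relStd (EL 1) (EV (UN 0)) (EV (UN 0)).
Proof. apply RR_std_i. simpl. auto. Qed.

Lemma std_Nth i : forall v, i < length v -> sem relStd (Nthg lab i (EV (UL v)) (EV (UN (nth i v 0)))).
Proof.
  induction i; intros v Hi; destruct v as [|x v]; simpl in *; try lia.
  - apply hd_i.
  - exists (EV (UL v)). split. apply tl_i. apply IHi. lia.
Qed.

Lemma std_ListOf gs v ws : evals gs v ws -> (forall g, In g gs -> In g L) ->
  sem relStd (ListOfg lab ix gs (EV (UL v)) (EV (UL ws))).
Proof.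
  induction 1; intros Hin; simpl.
  - apply nil_i.
  - exists (EV (UN w)). split. apply hd_i. split. apply cl_i; [apply Hin; left; reflexivity | assumption].
    exists (EV (UL ws)). split. apply tl_i. apply IHevals. intros; apply Hin; right; assumption.
Qed.

Lemma std_Ax p : In p L -> sem relStd (Ax (EL 0) (EL 1) lab ix p).
Proof.
  intro Hp. unfold Ax, PAll2. simpl. intros l y H.
  destruct (cl_e p l y Hp H) as [v [w [-> [-> Hev]]]].
  pose proof HL as HL0; unfold closedL in HL0; destruct HL0 as [HC [HP HM]].
  destruct p; simpl; inversion Hev; subst.
  - apply Z_i.
  - exists (EV (UN x)). split. apply hd_i. apply S_i.
  - apply std_Nth; auto.
  - destruct (HC _ _ Hp). exists (EV (UL ws)). split. apply std_ListOf; auto. apply cl_i; auto.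
  - destruct (HP _ _ Hp). exists (EV (UN 0)), (EV (UL v0)). split. apply hd_i. split. apply tl_i.
    left. split. apply Z_i. apply cl_i; auto.
  - destruct (HP _ _ Hp). exists (EV (UN (S n))), (EV (UL v0)). split. apply hd_i. split. apply tl_i.
    right. exists (EV (UN n)), (EV (UN r)), (EV (UL (n :: v0))), (EV (UL (n :: r :: v0))), (EV (UL (r :: v0))).
    split. apply S_i. split. apply hd_i. split. apply tl_i. split. apply cl_i; auto.
    split. apply hd_i. split. apply tl_i. split. apply hd_i. split. apply tl_i. apply cl_i; auto.
  - pose proof (HM _ Hp). split. apply num_i. split.
    + exists (EV (UL (w :: v))), (EV (UN 0)). split. apply hd_i. split. apply tl_i. split. apply Z_i. apply cl_i; auto.
    + intros m Hm. destruct (lt_e m w Hm) as [m' [-> Hm']]. match goal with HH : forall m, m < w -> _ |- _ => destruct (HH m' Hm') as [k Hk] end.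
      exists (EV (UL (m' :: v))), (EV (UN k)), (EV (UN (S k))). split. apply hd_i. split. apply tl_i.
      split. apply S_i. apply cl_i; auto.
Qed.
End Std.

Lemma sem_exs {D} (R : D -> D -> Prop) n : forall B, sem R (exs n B) <-> exists xs, length xs = n /\ sem R (B xs).
Proof.
  induction n; intros B; simpl.
  - split. intro H. exists []. auto. intros [xs [Hl H]]. destruct xs; simpl in Hl; try lia. exact H.
  - split.
    + intros [x Hx]. apply IHn in Hx. destruct Hx as [xs [Hl H]]. exists (x :: xs). simpl. auto.
    + intros [xs [Hl H]]. destruct xs as [|x xs]; simpl in Hl; try lia. exists x. apply IHn. exists xs. split; auto.
Qed.

Lemma std_Pn L x : sem (relStd L) (Pn x (EV (UN x)) (EL 0) (EL 1)).
Proof.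
  induction x; simpl.
  - apply RR_std_i. simpl. auto.
  - exists (EV (UN x)). split. apply RR_std_i. simpl. auto. intros s' z' -> ->. exact IHx.
Qed.

Lemma sem_bigAnd {D} (R : D -> D -> Prop) (ps : list (pf D)) : sem R (bigAnd ps) <-> forall p, In p ps -> sem R p.
Proof.
  induction ps; simpl. unfold PTrue; simpl. split; auto. intros _ p [].
  rewrite IHps. split. intros [H1 H2] p [<-|Hp]; auto. intros H. split; auto.
Qed.

Lemma std_Body h c : eval h [c] 1 -> sem (relStd (subterms h)) (Body h (EV (UN c)) (EL 0) (EL 1)).
Proof.
  intro Hev. set (L := subterms h). unfold Body. fold L. apply sem_exs.
  exists (map (fun k => EL (2 + k)) (seq 0 (5 + length L))).
  split. rewrite length_map, length_seq. reflexivity.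
  set (lab := fun k => nth k (map (fun k => EL (2 + k)) (seq 0 (5 + length L))) (EV (UN c))).
  assert (Hlab : forall k, k < 5 + length L -> lab k = EL (2 + k)).
  { intros k Hk. unfold lab. rewrite nth_indep with (d' := EL (2 + 0)) by (rewrite length_map, length_seq; lia).
    change (EL (2 + 0)) with ((fun k => EL (2 + k)) 0). rewrite map_nth. rewrite seq_nth by lia. reflexivity. }
  assert (Hix : forall p, In p L -> ixf L p < length L /\ nth (ixf L p) L RZero = p) by (intros; apply ixf_spec; auto).
  assert (HL : closedL L) by apply subterms_closed.
  simpl. split; [|split].
  - apply std_Fixed; auto.
  - apply sem_bigAnd. intros p Hp. apply in_map_iff in Hp. destruct Hp as [q [<- Hq]].
    apply std_Ax; auto.
  - exists (EV (UL [c])), (EV (UL [])), (EV (UN 1)), (EV (UN 0)).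
    split. apply nil_i; auto. split. apply hd_i; auto. split. apply tl_i; auto. split. apply Z_i.
    split. apply S_i. apply cl_i; auto. apply subterms_self.
Qed.

Lemma std_Aform h c : eval h [c] 1 -> sem (relStd (subterms h)) (Aform h c).
Proof.
  intro Hev. unfold Aform. simpl. right. exists (EV (UN c)), (EL 0), (EL 1). split.
  apply std_Pn. apply std_Body; auto.
Qed.

Lemma sem_Pn {D} (R : D -> D -> Prop) x : forall v s z, sem R (Pn x v s z) -> IsNum R s z x v.
Proof.
  induction x; simpl; intros v s z H. exact H.
  destruct H as [w [H1 H2]]. exists w. split; auto.
Qed.

Lemma sound_Aform {D} (R : D -> D -> Prop) h c : sem R (Aform h c) -> eval h [c] 0 -> sem R Theta.
Proof.
  intros H Hev. unfold Aform in H. cbn [sem] in H. destruct H as [H|[v [s [z [Hp Hb]]]]]; auto.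
  exfalso. apply sem_Pn in Hp. unfold Body in Hb. apply sem_exs in Hb. destruct Hb as [labs [_ Hb]].
  simpl in Hb. destruct Hb as [Hfix [Hax Hroot]].
  set (lab := fun k => nth k labs v) in *.
  set (L := subterms h) in *.
  rewrite sem_bigAnd in Hax.
  assert (Hax' : forall p, In p L -> sem R (Ax s z lab (ixf L) p)).
  { intros p Hp'. apply Hax. apply in_map_iff. eauto. }
  destruct Hroot as [l [ln [o [z0 [Hn [Hh [Ht [Hz [Hs Hc]]]]]]]]].
  assert (Hr : Rep R s z lab l [c]).
  { simpl. exists v. split; auto. split; auto. exists ln. auto. }
  pose proof (sound R s z lab (ixf L) L Hfix Hax' (subterms_closed h) h [c] 0 Hev (subterms_self h) l o Hr Hc) as H0.
  apply (IsNum_S_notzero R s z lab Hfix 0 o); auto. simpl. exists z0. auto.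
Qed.

Ltac fe k := match goal with
 | |- Rel _ _ = Rel _ _ => f_equal; lia
 | |- Eq _ _ = Eq _ _ => f_equal; lia
 | |- Bot = Bot => reflexivity
 | |- All _ = All _ => f_equal; fe k
 | |- Imp _ _ = Imp _ _ => f_equal; fe k
 | |- exf _ = exf _ => f_equal; fe k
 | |- andf _ _ = andf _ _ => f_equal; fe k
 | |- compile _ _ = compile _ _ => k
 end.

Lemma Pn_shift x : forall d, compile (3 + d) (Pn x d (1 + d) (2 + d)) = compile 3 (Pn x 0 1 2).
Proof.
  induction x; intro d.
  - cbn [Pn compile]. fe idtac.
  - cbn [Pn compile]. fe ltac:(etransitivity; [apply (IHx (3 + d))|symmetry; apply (IHx 3)]).
Qed.

Definition Ncode (x : nat) : nat := code (compile 3 (@Pn nat x 0 1 2)).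
Definition cX := code (compile 4 (@PR nat 1 3 0)).
Definition cE1 := code (Eq 1 4).
Definition cE2 := code (Eq 0 3).
Definition cN0 := Ncode 0.
Definition Ecode (n : nat) : nat := ex_c (and_c cX (all_c (all_c (imp_c cE1 (imp_c cE2 n))))).

Lemma code_Imp a b : code (Imp a b) = imp_c (code a) (code b).
Proof. reflexivity. Qed.
Lemma code_All a : code (All a) = all_c (code a).
Proof. reflexivity. Qed.
Lemma code_exf a : code (exf a) = ex_c (code a).
Proof. reflexivity. Qed.
Lemma code_andf a b : code (andf a b) = and_c (code a) (code b).
Proof. reflexivity. Qed.
Lemma code_orf a b : code (orf a b) = or_c (code a) (code b).
Proof. reflexivity. Qed.

Lemma Ncode_S x : Ncode (S x) = Ecode (Ncode x).
Proof.
  unfold Ncode. rewrite <- (Pn_shift x 3).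
  change (compile 3 (Pn (S x) 0 1 2)) with
    (exf (andf (compile 4 (@PR nat 1 3 0)) (All (All (Imp (Eq 1 4) (Imp (Eq 0 3) (compile (3 + 3) (Pn x 3 (1 + 3) (2 + 3))))))))).
  rewrite code_exf, code_andf, !code_All, !code_Imp.
  unfold Ecode, cX, cE1, cE2. reflexivity.
Qed.

Definition Eexp (a : aexp) := eex (eand (AK cX) (eall (eall (eimp (AK cE1) (eimp (AK cE2) a))))).
Lemma aeval_eimp v a b : aeval v (eimp a b) = imp_c (aeval v a) (aeval v b).
Proof. reflexivity. Qed.
Lemma aeval_eall v a : aeval v (eall a) = all_c (aeval v a).
Proof. reflexivity. Qed.
Lemma aeval_eex v a : aeval v (eex a) = ex_c (aeval v a).
Proof. unfold eex, ex_c. rewrite aeval_eimp, aeval_eall, aeval_eimp. reflexivity. Qed.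
Lemma aeval_eand v a b : aeval v (eand a b) = and_c (aeval v a) (aeval v b).
Proof. unfold eand, and_c. rewrite !aeval_eimp. reflexivity. Qed.
Lemma aeval_eor v a b : aeval v (eor a b) = or_c (aeval v a) (aeval v b).
Proof. unfold eor, or_c. rewrite !aeval_eimp. reflexivity. Qed.
Lemma aeval_AK v k : aeval v (AK k) = k.
Proof. reflexivity. Qed.

Lemma aeval_Eexp v a : aeval v (Eexp a) = Ecode (aeval v a).
Proof. unfold Eexp. rewrite aeval_eex, aeval_eand, !aeval_eall, !aeval_eimp, !aeval_AK. unfold Ecode. reflexivity. Qed.

Arguments cX : simpl never. Arguments cE1 : simpl never. Arguments cE2 : simpl never.
Arguments cN0 : simpl never.

Definition NR := RPrim (cst cN0) (acomp (Eexp (AV 1))).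
Lemma eval_NR x v : eval NR (x :: v) (Ncode x).
Proof.
  induction x.
  - constructor. apply eval_cst.
  - eapply ev_primS. exact IHx. rewrite Ncode_S. replace (Ecode (Ncode x)) with (aeval (x :: Ncode x :: v) (Eexp (AV 1))) by (rewrite aeval_Eexp; reflexivity).
    apply eval_acomp. simpl. repeat split; lia.
Qed.

Definition cTh := code (compile 0 (@Theta nat)).
Arguments cTh : simpl never.
Definition Fcode (n c : nat) := or_c cTh (ex_c (ex_c (ex_c (and_c n c)))).
Definition Fexp (a b : aexp) := eor (AK cTh) (eex (eex (eex (eand a b)))).
Definition FR := acomp (Fexp (AV 0) (AV 1)).
Definition hR (f : recf) := RComp f [RComp FR [RComp NR [RProj 0]; RProj 0]].

Lemma eval_hR f c y : eval f [Fcode (Ncode c) c] y -> eval (hR f) [c] y.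
Proof.
  intro H. econstructor; [|exact H]. econstructor; [|constructor].
  econstructor.
  - econstructor. econstructor. econstructor. apply (ev_proj 0 [c]). simpl; lia. constructor. apply eval_NR.
    econstructor. apply (ev_proj 0 [c]). simpl; lia. constructor.
  - replace (Fcode (Ncode c) c) with (aeval [Ncode c; c] (Fexp (AV 0) (AV 1))).
    apply eval_acomp. simpl. repeat split; lia.
    unfold Fexp. rewrite aeval_eor, !aeval_eex, aeval_eand, aeval_AK. unfold Fcode. reflexivity.
Qed.

Definition K1 : structure := Structure unit (fun _ _ => False) (inhabits tt).

Lemma models_sem (M : structure) (p1 : pf nat) (p2 : pf (dom M)) :
  wf [] p1 p2 -> (models M (compile 0 p1) <-> sem (rel M) p2).
Proof.
  intro W. destruct (dom_inhabited M) as [d0]. split.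
  - intro H. apply (compile_ok (rel M) [] p1 p2 W (fun _ => d0)). intros a x []. apply H.
  - intros H rho. apply (compile_ok (rel M) [] p1 p2 W rho). intros a x []. exact H.
Qed.

Lemma Theta_iso (M : structure) : sem (rel M) Theta -> isomorphic M K1.
Proof.
  intros [H1 H2]. destruct (dom_inhabited M) as [d0].
  exists (fun _ => tt), (fun _ => d0). simpl. split; [|split].
  - intro x. apply H1.
  - intros []. reflexivity.
  - intros x y. split; [|intros []]. intro Hr. rewrite (H1 x y) in Hr. exact (H2 y Hr).
Qed.

Lemma K1_Theta : sem (rel K1) Theta.
Proof. simpl. split. intros [] []. reflexivity. auto. Qed.

Lemma code_Aform h x : code (compile 0 (@Aform nat h x)) = Fcode (Ncode x) (code (compile 3 (@Body nat h 0 1 2))).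
Proof.
  change (compile 0 (Aform h x)) with
      (orf (compile 0 (@Theta nat)) (exf (exf (exf (andf (compile 3 (@Pn nat x 0 1 2)) (compile 3 (@Body nat h 0 1 2))))))).
  rewrite code_orf, !code_exf, code_andf. unfold Fcode, Ncode, cTh. reflexivity.
Qed.

Theorem theorem5p3 :
  ~ decidable_set (fun n : nat => exists A : form, code A = n /\ defining A).
Proof.
  intros [f Hf].
  set (h := hR f).
  remember (code (compile 3 (@Body nat h 0 1 2))) as cB eqn:HcB.
  set (A := compile 0 (@Aform nat h cB)).
  assert (HcA : code A = Fcode (Ncode cB) cB) by (unfold A; rewrite code_Aform, <- HcB; reflexivity).
  assert (HK1 : models K1 A).
  { apply (models_sem K1 _ (Aform h cB)). apply wf_Aform. unfold Aform. left. apply K1_Theta. }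
  destruct (Hf (code A)) as [[[A' [HA' Hdef]] Hev] | [Hnd Hev]].
  - apply code_inj in HA'. subst A'.
    rewrite HcA in Hev. apply eval_hR in Hev. fold h in Hev.
    set (Mstd := Structure El (relStd (subterms h)) (inhabits (EL 0))).
    assert (HM : models Mstd A).
    { apply (models_sem Mstd _ (Aform h cB)). apply wf_Aform. apply std_Aform. exact Hev. }
    destruct Hdef as [_ [G [_ [_ Hu]]]].
    assert (I1 : isomorphic K1 G) by (apply NNPP; intro N; exact (Hu K1 N HK1)).
    assert (I2 : isomorphic Mstd G) by (apply NNPP; intro N; exact (Hu Mstd N HM)).
    destruct I1 as [f1 [g1 [E1 [E2 _]]]]. destruct I2 as [f2 [g2 [E3 [E4 _]]]].
    assert (Hall : forall y1 y2 : dom G, y1 = y2).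
    { intros y1 y2. rewrite <- (E2 y1), <- (E2 y2). destruct (g1 y1), (g1 y2). reflexivity. }
    assert (EL 0 = EL 1).
    { change (@eq (dom Mstd) (EL 0) (EL 1)). rewrite <- (E3 (EL 0)), <- (E3 (EL 1)). f_equal. apply Hall. }
    discriminate.
  - apply Hnd. exists A. split; [reflexivity|].
    rewrite HcA in Hev. apply eval_hR in Hev. fold h in Hev.
    split; [|exists K1; split; [|split; [exact HK1|]]].
    + unfold sentence, A. apply (compile_bound tt [] _ (Aform h cB)). apply wf_Aform. intros a x [].
    + split. intros x H. exact H. intros x y H. exact H.
    + intros M Hn HM. apply Hn. apply Theta_iso.
      apply (sound_Aform (rel M) h cB); [|exact Hev].
      apply (models_sem M (Aform h cB) (Aform h cB)). apply wf_Aform. exact HM.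
Qed.
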